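(* For every matrix $A\in\mathbb{R}^{m\times n}$ and every $\epsilon>0$ there exists $t_0$ such that for every perturbed fictitious play system $(U,V)$ for $A$, $$\max V(t)-\min U(t)\le\epsilon t\quad\text{for all } t\ge t_0.$$
   Context: An iterative play system $(U,V)$ for $A\in\mathbb{R}^{m\times n}$ is a pair of sequences $U(0),U(1),\dots\in\mathbb{R}^n$ and $V(0),V(1),\dots\in\mathbb{R}^m$ such that $\min U(0)=\max V(0)$ and, for each $t$, $U(t+1)=U(t)+A_{i(t),*}$ and $V(t+1)=V(t)+A_{*,j(t)}$ for some indices $i(t)\in\{1,\dots,m\}$, $j(t)\in\{1,\dots,n\}$, where $A_{i,*}$ is the $i$th row and $A_{*,j}$ the $j$th column of $A$; $\max$, $\min$ of a vector denote its largest/smallest entry. Let $a=\max_{i,j}|A_{i,j}|$. A perturbed fictitious play system (PFP-system) is an iterative play system for which there exist vectors $E_V(t)\in\mathbb{R}^m$, $E_U(t)\in\mathbb{R}^n$ with $\|E_V(t)\|_\infty<a$ and $\|E_U(t)\|_\infty<a$ for each $t$, such that $i(t+1)\in\arg\max[V(t)+E_V(t)]$ and $j(t+1)\in\arg\min[U(t)+E_U(t)]$ for each $t$. *)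

(* Defs.v *)
From HB Require Import structures.
From mathcomp Require Import all_boot all_order all_algebra.
From mathcomp Require Import reals.
Set Implicit Arguments. Unset Strict Implicit. Unset Printing Implicit Defensive.
Import Order.TTheory GRing.Theory Num.Theory.
Local Open Scope ring_scope.

Definition vmax (R : realType) (k : nat) (v : 'I_k.+1 -> R) : R :=
  \big[Num.max/v ord0]_(i < k.+1) v i.
Definition vmin (R : realType) (k : nat) (v : 'I_k.+1 -> R) : R :=
  \big[Num.min/v ord0]_(i < k.+1) v i.

Definition is_argmax (R : realType) (k : nat) (w : 'I_k.+1 -> R) (i : 'I_k.+1) : Prop :=
  forall l, w l <= w i.
Definition is_argmin (R : realType) (k : nat) (w : 'I_k.+1 -> R) (j : 'I_k.+1) : Prop :=
  forall l, w j <= w l.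

Definition maxabs (R : realType) (m n : nat) (A : 'M[R]_(m.+1, n.+1)) : R :=
  \big[Num.max/0]_(i < m.+1) \big[Num.max/0]_(j < n.+1) `|A i j|.

Definition supnorm_lt (R : realType) (k : nat) (e : 'I_k.+1 -> R) (a : R) : Prop :=
  forall l, `|e l| < a.

Definition iterative_play_with (R : realType) (m n : nat) (A : 'M[R]_(m.+1, n.+1))
  (U : nat -> 'I_n.+1 -> R) (V : nat -> 'I_m.+1 -> R)
  (i : nat -> 'I_m.+1) (j : nat -> 'I_n.+1) : Prop :=
  vmin (U 0%N) = vmax (V 0%N) /\
  (forall t k, U t.+1 k = U t k + A (i t) k) /\
  (forall t l, V t.+1 l = V t l + A l (j t)).

Definition PFP_system (R : realType) (m n : nat) (A : 'M[R]_(m.+1, n.+1))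
  (U : nat -> 'I_n.+1 -> R) (V : nat -> 'I_m.+1 -> R) : Prop :=
  exists (i : nat -> 'I_m.+1) (j : nat -> 'I_n.+1),
    iterative_play_with A U V i j /\
    exists (EV : nat -> 'I_m.+1 -> R) (EU : nat -> 'I_n.+1 -> R),
      forall t,
        supnorm_lt (EV t) (maxabs A) /\ supnorm_lt (EU t) (maxabs A) /\
        is_argmax (fun l => V t l + EV t l) (i t.+1) /\
        is_argmin (fun k => U t k + EU t k) (j t.+1).

(* Main.v *)
Require Import Defs.
From HB Require Import structures.
From mathcomp Require Import all_boot all_order all_algebra.
From mathcomp Require Import reals lra zify.
From Stdlib Require Import Classical.
Import Order.TTheory GRing.Theory Num.Theory.
Local Open Scope ring_scope.
Set Implicit Arguments. Unset Strict Implicit. Unset Printing Implicit Defensive.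

Definition bmax (R : realType) k (I : {set 'I_k.+1}) (v : 'I_k.+1 -> R) : R :=
  \big[Num.max/v (odflt ord0 [pick x in I])]_(l in I) v l.
Definition bmin (R : realType) k (I : {set 'I_k.+1}) (v : 'I_k.+1 -> R) : R :=
  \big[Num.min/v (odflt ord0 [pick x in I])]_(l in I) v l.

Lemma bmax_ub (R : realType) k (I : {set 'I_k.+1}) (v : 'I_k.+1 -> R) l :
  l \in I -> v l <= bmax I v.
Proof. by move=> lI; rewrite /bmax (bigD1 l) //= le_max lexx. Qed.

Lemma bmin_lb (R : realType) k (I : {set 'I_k.+1}) (v : 'I_k.+1 -> R) l :
  l \in I -> bmin I v <= v l.
Proof. by move=> lI; rewrite /bmin (bigD1 l) //= ge_min lexx. Qed.

Lemma bmax_ex (R : realType) k (I : {set 'I_k.+1}) (v : 'I_k.+1 -> R) :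
  I != set0 -> exists2 l, l \in I & bmax I v = v l.
Proof.
move=> /set0Pn [x xI]; rewrite /bmax.
apply: (big_ind (fun y => exists2 l, l \in I & y = v l)).
- case: pickP => [y yI|/(_ x)]; last by rewrite xI.
  by exists y.
- move=> _ _ [l1 l1I ->] [l2 l2I ->].
  case: (leP (v l1) (v l2)) => h.
  + by exists l2 => //; rewrite max_r.
  + by exists l1 => //; rewrite max_l // ltW.
- by move=> l lI; exists l.
Qed.

Lemma bmin_ex (R : realType) k (I : {set 'I_k.+1}) (v : 'I_k.+1 -> R) :
  I != set0 -> exists2 l, l \in I & bmin I v = v l.
Proof.
move=> /set0Pn [x xI]; rewrite /bmin.
apply: (big_ind (fun y => exists2 l, l \in I & y = v l)).
- case: pickP => [y yI|/(_ x)]; last by rewrite xI.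
  by exists y.
- move=> _ _ [l1 l1I ->] [l2 l2I ->].
  case: (leP (v l1) (v l2)) => h.
  + by exists l1 => //; rewrite min_l.
  + by exists l2 => //; rewrite min_r // ltW.
- by move=> l lI; exists l.
Qed.

Lemma bmax_le (R : realType) k (I : {set 'I_k.+1}) (v w : 'I_k.+1 -> R) d :
  I != set0 -> (forall l, l \in I -> w l <= v l + d) -> bmax I w <= bmax I v + d.
Proof.
move=> I0 h; have [l lI ->] := bmax_ex w I0.
have := h l lI; have := bmax_ub v lI; lra.
Qed.

Lemma bmin_le (R : realType) k (I : {set 'I_k.+1}) (v w : 'I_k.+1 -> R) d :
  I != set0 -> (forall l, l \in I -> w l <= v l + d) -> bmin I w <= bmin I v + d.
Proof.
move=> I0 h; have [l lI ->] := bmin_ex v I0.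
have := h l lI; have := bmin_lb w lI; lra.
Qed.

Lemma bmax_char (R : realType) k (I : {set 'I_k.+1}) (v : 'I_k.+1 -> R) x l0 :
  l0 \in I -> x = v l0 -> (forall l, l \in I -> v l <= x) -> bmax I v = x.
Proof.
move=> l0I -> h; have I0 : I != set0 by apply/set0Pn; exists l0.
have [l lI e] := bmax_ex v I0.
have := bmax_ub v l0I; have := h l lI; rewrite -e; lra.
Qed.

Lemma bmin_char (R : realType) k (I : {set 'I_k.+1}) (v : 'I_k.+1 -> R) x l0 :
  l0 \in I -> x = v l0 -> (forall l, l \in I -> x <= v l) -> bmin I v = x.
Proof.
move=> l0I -> h; have I0 : I != set0 by apply/set0Pn; exists l0.
have [l lI e] := bmin_ex v I0.
have := bmin_lb v l0I; have := h l lI; rewrite -e; lra.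
Qed.

Definition Sys (R : realType) m n (A : 'M[R]_(m.+1,n.+1)) (c : R)
  (I : {set 'I_m.+1}) (J : {set 'I_n.+1})
  (U : nat -> 'I_n.+1 -> R) (V : nat -> 'I_m.+1 -> R)
  (i : nat -> 'I_m.+1) (j : nat -> 'I_n.+1) (s e : nat) : Prop :=
  (forall t, (s <= t)%N -> (t < e)%N ->
     [/\ i t \in I, j t \in J, (forall k, U t.+1 k = U t k + A (i t) k)
       & (forall l, V t.+1 l = V t l + A l (j t))]) /\
  (forall t, (s <= t)%N -> (t.+2 <= e)%N ->
     (forall l, l \in I -> V t l - c <= V t (i t.+1)) /\
     (forall k, k \in J -> U t (j t.+1) <= U t k + c)).

Lemma coordV (R : realType) m n (A : 'M[R]_(m.+1,n.+1)) c I J U V i j s e (a : R) :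
  Sys A c I J U V i j s e -> (forall l k, `|A l k| <= a) ->
  forall t d, (s <= t)%N -> (t + d <= e)%N -> forall l,
  V t l - a * d%:R <= V (t + d)%N l /\ V (t + d)%N l <= V t l + a * d%:R.
Proof.
move=> [S1 _] Ha t d st; elim: d => [|d IH] tde l.
  by rewrite ?addn0 mulr0n mulr0; split; lra.
have tde' : (t + d < e)%N by rewrite addnS in tde.
have [h1 h2] := IH (ltnW tde') l.
have [_ _ _ hV] := S1 (t + d)%N (leq_trans st (leq_addr _ _)) tde'.
rewrite addnS hV -addn1 natrD.
have := Ha l (j (t + d)%N); rewrite ler_norml => /andP [h3 h4]. lra.
Qed.

Lemma coordU (R : realType) m n (A : 'M[R]_(m.+1,n.+1)) c I J U V i j s e (a : R) :
  Sys A c I J U V i j s e -> (forall l k, `|A l k| <= a) ->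
  forall t d, (s <= t)%N -> (t + d <= e)%N -> forall k,
  U t k - a * d%:R <= U (t + d)%N k /\ U (t + d)%N k <= U t k + a * d%:R.
Proof.
move=> [S1 _] Ha t d st; elim: d => [|d IH] tde k.
  by rewrite ?addn0 mulr0; split; lra.
have tde' : (t + d < e)%N by rewrite addnS in tde.
have [h1 h2] := IH (ltnW tde') k.
have [_ _ hU _] := S1 (t + d)%N (leq_trans st (leq_addr _ _)) tde'.
rewrite addnS hU -addn1 natrD.
have := Ha (i (t + d)%N) k; rewrite ler_norml => /andP [h3 h4]. lra.
Qed.

Lemma closedV (R : realType) m n (A : 'M[R]_(m.+1,n.+1)) c I J U V i j s e :
  Sys A c I J U V i j s e ->
  forall d, (s + d <= e)%N -> forall l,
  V (s + d)%N l = V s l + \sum_(x < d) A l (j (s + x)%N).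
Proof.
move=> [S1 _]; elim=> [|d IH] sde l; first by rewrite addn0 big_ord0 addr0.
have sde' : (s + d < e)%N by rewrite addnS in sde.
have [_ _ _ hV] := S1 (s + d)%N (leq_addr _ _) sde'.
by rewrite addnS hV IH ?(ltnW sde') // big_ord_recr /= addrA.
Qed.

Lemma closedU (R : realType) m n (A : 'M[R]_(m.+1,n.+1)) c I J U V i j s e :
  Sys A c I J U V i j s e ->
  forall d, (s + d <= e)%N -> forall k,
  U (s + d)%N k = U s k + \sum_(x < d) A (i (s + x)%N) k.
Proof.
move=> [S1 _]; elim=> [|d IH] sde k; first by rewrite addn0 big_ord0 addr0.
have sde' : (s + d < e)%N by rewrite addnS in sde.
have [_ _ hU _] := S1 (s + d)%N (leq_addr _ _) sde'.
by rewrite addnS hU IH ?(ltnW sde') // big_ord_recr /= addrA.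
Qed.

Lemma invariant (R : realType) m n (A : 'M[R]_(m.+1,n.+1)) c I J U V i j s e :
  Sys A c I J U V i j s e ->
  forall d, (s + d <= e)%N -> (0 < d)%N ->
  bmin I (V (s + d)%N) - bmax J (U (s + d)%N) <= bmax I (V s) - bmin J (U s).
Proof.
move=> S d sde d0.
have hkey : \sum_(x < d) V (s + d)%N (i (s + x)%N) - \sum_(x < d) U (s + d)%N (j (s + x)%N)
   = \sum_(x < d) (V s (i (s + x)%N) - U s (j (s + x)%N)).
  rewrite (eq_bigr (fun x : 'I_d => V s (i (s + x)%N) + \sum_(y < d) A (i (s + x)%N) (j (s + y)%N)));
    last by move=> x _; rewrite (closedV S).
  rewrite [X in _ - X](eq_bigr (fun x : 'I_d => U s (j (s + x)%N) + \sum_(y < d) A (i (s + y)%N) (j (s + x)%N)));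
    last by move=> x _; rewrite (closedU S).
  by rewrite !big_split /= [X in _ - (_ + X)]exchange_big /= sumrN opprD addrACA subrr addr0.
have inI x : (x < d)%N -> i (s + x)%N \in I /\ j (s + x)%N \in J.
  move=> xd; have xx : (s + x < s + d)%N by rewrite ltn_add2l.
  by have [h1 h2 _ _] := S.1 (s + x)%N (leq_addr _ _) (leq_trans xx sde).
have h1 : \sum_(x < d) bmin I (V (s + d)%N) <= \sum_(x < d) V (s + d)%N (i (s + x)%N).
  by apply: ler_sum => x _; apply: bmin_lb; have [] := inI x (ltn_ord x).
have h2 : \sum_(x < d) U (s + d)%N (j (s + x)%N) <= \sum_(x < d) bmax J (U (s + d)%N).
  by apply: ler_sum => x _; apply: bmax_ub; have [] := inI x (ltn_ord x).
have h3 : \sum_(x < d) (V s (i (s + x)%N) - U s (j (s + x)%N)) <= \sum_(x < d) (bmax I (V s) - bmin J (U s)).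
  apply: ler_sum => x _; have [a1 a2] := inI x (ltn_ord x).
  have := bmax_ub (V s) a1; have := bmin_lb (U s) a2; lra.
have cst (y : R) : \sum_(x < d) y = y * d%:R by rewrite sumr_const card_ord mulr_natr.
rewrite !cst in h1 h2 h3.
have dpos : 0 < (d%:R : R) by rewrite ltr0n.
have H : (bmin I (V (s + d)%N) - bmax J (U (s + d)%N)) * d%:R <= (bmax I (V s) - bmin J (U s)) * d%:R.
  rewrite mulrBl; apply: le_trans h3; rewrite -hkey; exact: lerB.
by rewrite ler_pM2r in H.
Qed.

Definition DD (R : realType) m n (I : {set 'I_m.+1}) (J : {set 'I_n.+1})
  (U : nat -> 'I_n.+1 -> R) (V : nat -> 'I_m.+1 -> R) (t : nat) : R :=
  bmax I (V t) - bmin J (U t).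

Lemma Sys_sub (R : realType) m n (A : 'M[R]_(m.+1,n.+1)) c I J U V i j s e s' e' :
  Sys A c I J U V i j s e -> (s <= s')%N -> (e' <= e)%N -> Sys A c I J U V i j s' e'.
Proof.
move=> [S1 S2] ss ee; split=> t st te.
  by apply: S1; [exact: leq_trans ss st | exact: leq_trans te ee].
by apply: S2; [exact: leq_trans ss st | exact: leq_trans te ee].
Qed.

Lemma maxV_range (R : realType) m n (A : 'M[R]_(m.+1,n.+1)) c I J U V i j s e (a : R) :
  Sys A c I J U V i j s e -> (forall l k, `|A l k| <= a) -> I != set0 ->
  forall t d, (s <= t)%N -> (t + d <= e)%N ->
  bmax I (V t) - a * d%:R <= bmax I (V (t + d)%N) /\ bmax I (V (t + d)%N) <= bmax I (V t) + a * d%:R.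
Proof.
move=> S Ha I0 t d st tde; have h := coordV S Ha st tde.
split; last by apply: bmax_le => // l _; have [] := h l.
suff : bmax I (V t) <= bmax I (V (t + d)%N) + a * d%:R by lra.
by apply: bmax_le => // l _; have [h1 _] := h l; lra.
Qed.

Lemma minU_range (R : realType) m n (A : 'M[R]_(m.+1,n.+1)) c I J U V i j s e (a : R) :
  Sys A c I J U V i j s e -> (forall l k, `|A l k| <= a) -> J != set0 ->
  forall t d, (s <= t)%N -> (t + d <= e)%N ->
  bmin J (U t) - a * d%:R <= bmin J (U (t + d)%N) /\ bmin J (U (t + d)%N) <= bmin J (U t) + a * d%:R.
Proof.
move=> S Ha J0 t d st tde; have h := coordU S Ha st tde.
split; last by apply: bmin_le => // k _; have [] := h k.
suff : bmin J (U t) <= bmin J (U (t + d)%N) + a * d%:R by lra.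
by apply: bmin_le => // k _; have [h1 _] := h k; lra.
Qed.

Lemma Dstep (R : realType) m n (A : 'M[R]_(m.+1,n.+1)) c I J U V i j s e (a : R) :
  Sys A c I J U V i j s e -> (forall l k, `|A l k| <= a) -> I != set0 -> J != set0 ->
  forall t d, (s <= t)%N -> (t + d <= e)%N ->
  DD I J U V (t + d)%N <= DD I J U V t + 2 * a * d%:R.
Proof.
move=> S Ha I0 J0 t d st tde; rewrite /DD.
have [_ h1] := maxV_range S Ha I0 st tde; have [h2 _] := minU_range S Ha J0 st tde.
lra.
Qed.

Lemma spreadV (R : realType) m n (A : 'M[R]_(m.+1,n.+1)) c I J U V i j s e (a : R) :
  Sys A c I J U V i j s e -> (forall l k, `|A l k| <= a) -> 0 <= a -> I != set0 ->
  forall w L, (s <= w)%N -> (w + L <= e)%N ->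
  (forall l, l \in I -> exists t, [/\ (w <= t)%N, (t <= w + L)%N & bmax I (V t) - c <= V t l]) ->
  bmax I (V (w + L)%N) - bmin I (V (w + L)%N) <= 2 * a * L%:R + c.
Proof.
move=> S Ha a0 I0 w L sw wLe H.
have [l lI ->] := bmin_ex (V (w + L)%N) I0.
have [t [wt tw hl]] := H l lI.
have st : (s <= t)%N by exact: leq_trans sw wt.
have tde : (t + (w + L - t) <= e)%N by rewrite subnKC.
have [h1 _] := coordV S Ha st tde l.
have [_ h2] := maxV_range S Ha I0 st tde.
rewrite subnKC // in h1 h2.
have dL : ((w + L - t)%:R : R) <= L%:R by rewrite ler_nat; lia.
have : a * (w + L - t)%:R <= a * L%:R by rewrite ler_wpM2l.
lra.
Qed.

Lemma spreadU (R : realType) m n (A : 'M[R]_(m.+1,n.+1)) c I J U V i j s e (a : R) :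
  Sys A c I J U V i j s e -> (forall l k, `|A l k| <= a) -> 0 <= a -> J != set0 ->
  forall w L, (s <= w)%N -> (w + L <= e)%N ->
  (forall k, k \in J -> exists t, [/\ (w <= t)%N, (t <= w + L)%N & U t k <= bmin J (U t) + c]) ->
  bmax J (U (w + L)%N) - bmin J (U (w + L)%N) <= 2 * a * L%:R + c.
Proof.
move=> S Ha a0 J0 w L sw wLe H.
have J0' := J0.
have [k kJ ->] := bmax_ex (U (w + L)%N) J0.
have [t [wt tw hk]] := H k kJ.
have st : (s <= t)%N by exact: leq_trans sw wt.
have tde : (t + (w + L - t) <= e)%N by rewrite subnKC.
have [_ h1] := coordU S Ha st tde k.
have [h2 _] := minU_range S Ha J0 st tde.
rewrite subnKC // in h1 h2.
have dL : ((w + L - t)%:R : R) <= L%:R by rewrite ler_nat; lia.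
have : a * (w + L - t)%:R <= a * L%:R by rewrite ler_wpM2l.
lra.
Qed.

Lemma subrow (R : realType) m n (A : 'M[R]_(m.+1,n.+1)) c I J U V i j s e w l :
  Sys A c I J U V i j s e -> 0 <= c -> (s <= w)%N -> (w < e)%N -> l \in I ->
  (forall t, (w <= t)%N -> (t <= e)%N -> V t l < bmax I (V t) - c) ->
  [/\ I :\ l != set0,
      (forall t, (w <= t)%N -> (t <= e)%N -> bmax (I :\ l) (V t) = bmax I (V t))
    & Sys A c (I :\ l) J U V i j w.+1 e].
Proof.
move=> [S1 S2] c0 sw we lI H.
have I0 : I != set0 by apply/set0Pn; exists l.
have eqm t : (w <= t)%N -> (t <= e)%N ->
    exists2 l', l' \in I :\ l & bmax I (V t) = V t l'.
  move=> wt te; have [l' l'I e'] := bmax_ex (V t) I0; exists l' => //.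
  rewrite !inE l'I andbT; apply/eqP => ll; have := H t wt te; rewrite e' ll; lra.
split.
- by have [l' l'I _] := eqm w (leqnn _) (ltnW we); apply/set0Pn; exists l'.
- move=> t wt te; have [l' l'I e'] := eqm t wt te.
  apply: (bmax_char l'I) => // l'' ; rewrite inE => /andP [_ h]; exact: bmax_ub.
split=> t wt te.
  have [h1 h2 h3 h4] := S1 t (leq_trans sw (ltnW wt)) te; split => //.
  rewrite !inE h1 andbT; apply/eqP => itl.
  case: t wt te h1 h2 h3 h4 itl => [//|t] wt te h1 h2 h3 h4 itl.
  have [h5 _] := S2 t (leq_trans sw wt) te.
  have [l' l'I e'] := bmax_ex (V t) I0.
  have := h5 l' l'I; have := H t wt (ltnW (ltnW te)); rewrite itl e'; lra.
have [h5 h6] := S2 t (leq_trans sw (ltnW wt)) te; split => // l'.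
by rewrite inE => /andP [_ h]; exact: h5.
Qed.

Lemma subcol (R : realType) m n (A : 'M[R]_(m.+1,n.+1)) c I J U V i j s e w k :
  Sys A c I J U V i j s e -> 0 <= c -> (s <= w)%N -> (w < e)%N -> k \in J ->
  (forall t, (w <= t)%N -> (t <= e)%N -> bmin J (U t) + c < U t k) ->
  [/\ J :\ k != set0,
      (forall t, (w <= t)%N -> (t <= e)%N -> bmin (J :\ k) (U t) = bmin J (U t))
    & Sys A c I (J :\ k) U V i j w.+1 e].
Proof.
move=> [S1 S2] c0 sw we kJ H.
have J0 : J != set0 by apply/set0Pn; exists k.
have eqm t : (w <= t)%N -> (t <= e)%N ->
    exists2 k', k' \in J :\ k & bmin J (U t) = U t k'.
  move=> wt te; have [k' k'J e'] := bmin_ex (U t) J0; exists k' => //.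
  rewrite !inE k'J andbT; apply/eqP => kk; have := H t wt te; rewrite e' kk; lra.
split.
- by have [k' k'J _] := eqm w (leqnn _) (ltnW we); apply/set0Pn; exists k'.
- move=> t wt te; have [k' k'J e'] := eqm t wt te.
  apply: (bmin_char k'J) => // k'' ; rewrite inE => /andP [_ h]; exact: bmin_lb.
split=> t wt te.
  have [h1 h2 h3 h4] := S1 t (leq_trans sw (ltnW wt)) te; split => //.
  rewrite !inE h2 andbT; apply/eqP => jtk.
  case: t wt te h1 h2 h3 h4 jtk => [//|t] wt te h1 h2 h3 h4 jtk.
  have [_ h5] := S2 t (leq_trans sw wt) te.
  have [k' k'J e'] := bmin_ex (U t) J0.
  have := h5 k' k'J; have := H t wt (ltnW (ltnW te)); rewrite jtk e'; lra.
have [h5 h6] := S2 t (leq_trans sw (ltnW wt)) te; split => // k'.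
by rewrite inE => /andP [_ h]; exact: h6.
Qed.

Lemma window (R : realType) m n (A : 'M[R]_(m.+1,n.+1)) c I J U V i j s E (a eps' : R) (T1 : nat) :
  Sys A c I J U V i j s E -> (forall l k, `|A l k| <= a) -> 0 <= a -> 0 <= c -> 0 <= eps' ->
  I != set0 -> J != set0 ->
  (forall l, l \in I -> I :\ l != set0 -> forall T, (T1 <= T)%N ->
     forall U V i j s, Sys A c (I :\ l) J U V i j s (s + T) ->
     DD (I :\ l) J U V (s + T) - DD (I :\ l) J U V s <= eps' * T%:R) ->
  (forall k, k \in J -> J :\ k != set0 -> forall T, (T1 <= T)%N ->
     forall U V i j s, Sys A c I (J :\ k) U V i j s (s + T) ->
     DD I (J :\ k) U V (s + T) - DD I (J :\ k) U V s <= eps' * T%:R) ->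
  forall w L', (s <= w)%N -> (w + L'.+1 <= E)%N -> (T1 <= L')%N ->
  DD I J U V (w + L'.+1) - DD I J U V s <= 4 * a * L'.+1%:R + 2 * c \/
  DD I J U V (w + L'.+1) - DD I J U V w <= 2 * a + eps' * L'.+1%:R.
Proof.
move=> S0 Ha a0 c0 e0 I0 J0 HR HC w L' sw wE TL.
set e := (w + L'.+1)%N.
have S : Sys A c I J U V i j s e by apply: (Sys_sub S0).
have we : (w < e)%N by rewrite /e addnS ltnS leq_addr.
have ee : e = (w.+1 + L')%N by rewrite /e addnS addSn.
have st1 : DD I J U V w.+1 <= DD I J U V w + 2 * a * 1%:R.
  by rewrite -addn1; apply: (Dstep S Ha I0 J0 sw); rewrite addn1.
have LL : eps' * L'%:R <= eps' * L'.+1%:R by rewrite ler_wpM2l // ler_nat.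
case: (classic (exists l, l \in I /\ forall t, (w <= t)%N -> (t <= e)%N -> V t l < bmax I (V t) - c)).
  move=> [l [lI Hl]]; right.
  have [I0' eqb S'] := subrow S c0 sw we lI Hl.
  rewrite ee in S'; have := HR l lI I0' L' TL U V i j w.+1 S'.
  rewrite /DD -ee !eqb // ?leqnn //; last exact: ltnW.
  rewrite -/(DD I J U V e) -/(DD I J U V w.+1) -/(DD I J U V w); lra.
move=> NR.
case: (classic (exists k, k \in J /\ forall t, (w <= t)%N -> (t <= e)%N -> bmin J (U t) + c < U t k)).
  move=> [k [kJ Hk]]; right.
  have [J0' eqb S'] := subcol S c0 sw we kJ Hk.
  rewrite ee in S'; have := HC k kJ J0' L' TL U V i j w.+1 S'.
  rewrite /DD -ee !eqb // ?leqnn //; last exact: ltnW.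
  rewrite -/(DD I J U V e) -/(DD I J U V w.+1) -/(DD I J U V w); lra.
move=> NC; left.
have hV := spreadV S Ha a0 I0 sw (leqnn _).
have hU := spreadU S Ha a0 J0 sw (leqnn _).
have hV' : bmax I (V e) - bmin I (V e) <= 2 * a * L'.+1%:R + c.
  apply: hV => l lI; apply: NNPP => hn; apply: NR; exists l; split => // t wt te.
  rewrite ltNge; apply/negP => hle; apply: hn; exists t; split => //.
have hU' : bmax J (U e) - bmin J (U e) <= 2 * a * L'.+1%:R + c.
  apply: hU => k kJ; apply: NNPP => hn; apply: NC; exists k; split => // t wt te.
  rewrite ltNge; apply/negP => hle; apply: hn; exists t; split => //.
have se : (s < e)%N by exact: (leq_ltn_trans sw we).
have h1 : (s + (e - s) <= e)%N by rewrite subnKC // ltnW.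
have h2 : (0 < e - s)%N by rewrite subn_gt0.
have := invariant S h1 h2; rewrite subnKC; last exact: ltnW.
rewrite /DD; lra.
Qed.

Lemma mainG (R : realType) m n (A : 'M[R]_(m.+1,n.+1)) (c a : R) :
  (forall l k, `|A l k| <= a) -> 0 <= a -> 0 <= c ->
  forall N (I : {set 'I_m.+1}) (J : {set 'I_n.+1}), (#|I| + #|J| <= N)%N ->
  I != set0 -> J != set0 -> forall eps : R, 0 < eps ->
  exists T0 : nat, forall T, (T0 <= T)%N -> forall U V i j s,
    Sys A c I J U V i j s (s + T) ->
    DD I J U V (s + T) - DD I J U V s <= eps * T%:R.
Proof.
move=> Ha a0 c0; elim=> [|N IH] I J hN I0 J0 eps e0.
  by move: I0; rewrite -card_gt0; lia.
have e0' : 0 < eps / 2 by rewrite divr_gt0.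
have HRex : forall l, exists T1 : nat, l \in I -> I :\ l != set0 -> forall T, (T1 <= T)%N ->
     forall U V i j s, Sys A c (I :\ l) J U V i j s (s + T) ->
     DD (I :\ l) J U V (s + T) - DD (I :\ l) J U V s <= eps / 2 * T%:R.
  move=> l; case: (boolP (l \in I)) => lI; last by exists 0%N.
  case: (boolP (I :\ l != set0)) => I0'; last by exists 0%N.
  have hN' : (#|I :\ l| + #|J| <= N)%N by move: hN; rewrite (cardsD1 l I) lI; lia.
  have [T1 H] := IH _ _ hN' I0' J0 _ e0'; by exists T1.
have HCex : forall k, exists T1 : nat, k \in J -> J :\ k != set0 -> forall T, (T1 <= T)%N ->
     forall U V i j s, Sys A c I (J :\ k) U V i j s (s + T) ->
     DD I (J :\ k) U V (s + T) - DD I (J :\ k) U V s <= eps / 2 * T%:R.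
  move=> k; case: (boolP (k \in J)) => kJ; last by exists 0%N.
  case: (boolP (J :\ k != set0)) => J0'; last by exists 0%N.
  have hN' : (#|I| + #|J :\ k| <= N)%N by move: hN; rewrite (cardsD1 k J) kJ; lia.
  have [T1 H] := IH _ _ hN' I0 J0' _ e0'; by exists T1.
have [fr Hfr] := fin_all_exists HRex.
have [fc Hfc] := fin_all_exists HCex.
set T1 := (\max_l fr l + \max_k fc k)%N.
have HR : forall l, l \in I -> I :\ l != set0 -> forall T, (T1 <= T)%N ->
     forall U V i j s, Sys A c (I :\ l) J U V i j s (s + T) ->
     DD (I :\ l) J U V (s + T) - DD (I :\ l) J U V s <= eps / 2 * T%:R.
  move=> l lI I0' T hT; apply: Hfr => //; apply: leq_trans hT.
  have := @leq_bigmax _ fr l; rewrite /T1; lia.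
have HC : forall k, k \in J -> J :\ k != set0 -> forall T, (T1 <= T)%N ->
     forall U V i j s, Sys A c I (J :\ k) U V i j s (s + T) ->
     DD I (J :\ k) U V (s + T) - DD I (J :\ k) U V s <= eps / 2 * T%:R.
  move=> k kJ J0' T hT; apply: Hfc => //; apply: leq_trans hT.
  have := @leq_bigmax _ fc k; rewrite /T1; lia.
set N1 := Num.Def.archi_bound (8 * a / eps).
set L' := (T1 + N1)%N.
have hL : 2 * a <= eps / 4 * L'.+1%:R.
  have h := archi_boundP (_ : 0 <= 8 * a / eps).
  have h' : 8 * a / eps < L'.+1%:R.
    apply: (lt_le_trans (h _)); first by rewrite divr_ge0 // ?mulr_ge0 // ltW.
    by rewrite ler_nat /L' -/N1; lia.
  rewrite ltr_pdivrMr // in h'; lra.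
set K := 4 * a * L'.+1%:R + 2 * c + 2 * a * L'.+1%:R.
have claim : forall T U V i j s, Sys A c I J U V i j s (s + T) ->
    DD I J U V (s + T) - DD I J U V s <= 3 / 4 * eps * T%:R + K.
  elim/ltn_ind => T IHT U V i j s S.
  have aL : 0 <= a * L'.+1%:R by rewrite mulr_ge0.
  have eT : 0 <= eps * T%:R by rewrite mulr_ge0 // ltW.
  case: (ltnP T L'.+1) => hT.
    have := Dstep S Ha I0 J0 (leqnn s) (leqnn _).
    have : a * T%:R <= a * L'.+1%:R by rewrite ler_wpM2l // ler_nat ltnW.
    rewrite /K; lra.
  set T2 := (T - L'.+1)%N.
  have eT2 : (s + T2 + L'.+1 = s + T)%N by rewrite /T2; lia.
  have hw := window S Ha a0 c0 (ltW e0') I0 J0 HR HC (leq_addr T2 s) (_ : (s + T2 + L'.+1 <= s + T)%N) (leq_addr _ _).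
  rewrite eT2 in hw; case: (hw (leqnn _)) => hw'.
    rewrite /K; lra.
  have T2T : (T2 < T)%N by rewrite /T2; lia.
  have S2 : Sys A c I J U V i j s (s + T2) by apply: (Sys_sub S) => //; lia.
  have := IHT T2 T2T U V i j s S2.
  have TT : (T%:R : R) = T2%:R + L'.+1%:R by rewrite -natrD /T2 subnK.
  rewrite TT; lra.
have K0 : 0 <= 4 * K / eps.
  have aL : 0 <= a * L'.+1%:R by rewrite mulr_ge0.
  have : 0 <= 4 * K by rewrite /K; lra.
  by move=> h; rewrite divr_ge0 // ltW.
exists (Num.Def.archi_bound (4 * K / eps)) => T hT U V i j s S.
have h := archi_boundP K0.
have h' : 4 * K / eps < T%:R by apply: (lt_le_trans h); rewrite ler_nat.
rewrite ltr_pdivrMr // in h'.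
have := claim T U V i j s S; lra.
Qed.


Lemma maxabs_ub (R : realType) m n (A : 'M[R]_(m.+1,n.+1)) l k : `|A l k| <= maxabs A.
Proof.
rewrite /maxabs (bigD1 l) //= le_max; apply/orP; left.
by rewrite (bigD1 k) //= le_max lexx.
Qed.

Lemma vmax_bmax (R : realType) k (v : 'I_k.+1 -> R) : bmax setT v = vmax v.
Proof.
have [l0 _ e0] : exists2 l0, l0 \in [set: 'I_k.+1] & vmax v = v l0.
  rewrite /vmax; apply: (big_ind (fun y => exists2 l, l \in [set: 'I_k.+1] & y = v l)).
  - by exists ord0; rewrite ?in_setT.
  - move=> _ _ [l1 l1I ->] [l2 l2I ->].
    case: (leP (v l1) (v l2)) => h.
    + by exists l2 => //; rewrite max_r.
    + by exists l1 => //; rewrite max_l // ltW.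
  - by move=> l _; exists l; rewrite ?in_setT.
apply: (bmax_char (l0 := l0)); [by rewrite in_setT | exact: e0 | move=> l _].
by rewrite /vmax (bigD1 l) //= le_max lexx.
Qed.

Lemma vmin_bmin (R : realType) k (v : 'I_k.+1 -> R) : bmin setT v = vmin v.
Proof.
have [l0 _ e0] : exists2 l0, l0 \in [set: 'I_k.+1] & vmin v = v l0.
  rewrite /vmin; apply: (big_ind (fun y => exists2 l, l \in [set: 'I_k.+1] & y = v l)).
  - by exists ord0; rewrite ?in_setT.
  - move=> _ _ [l1 l1I ->] [l2 l2I ->].
    case: (leP (v l1) (v l2)) => h.
    + by exists l1 => //; rewrite min_l.
    + by exists l2 => //; rewrite min_r // ltW.
  - by move=> l _; exists l; rewrite ?in_setT.
apply: (bmin_char (l0 := l0)); [by rewrite in_setT | exact: e0 | move=> l _].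
by rewrite /vmin (bigD1 l) //= ge_min lexx.
Qed.

Theorem lemma4 (R : realType) (m n : nat) (A : 'M[R]_(m.+1, n.+1)) (eps : R) :
  0 < eps ->
  exists t0 : nat,
    forall (U : nat -> 'I_n.+1 -> R) (V : nat -> 'I_m.+1 -> R),
      PFP_system A U V ->
      forall t : nat, (t0 <= t)%N ->
        vmax (V t) - vmin (U t) <= eps * t%:R.
Proof.
move=> e0.
set a := maxabs A.
have Ha : forall l k, `|A l k| <= a by move=> l k; exact: maxabs_ub.
have a0 : 0 <= a by apply: le_trans (Ha ord0 ord0).
have c0 : 0 <= 2 * a by rewrite mulr_ge0.
have I0 : [set: 'I_m.+1] != set0 by apply/set0Pn; exists ord0; rewrite in_setT.
have J0 : [set: 'I_n.+1] != set0 by apply/set0Pn; exists ord0; rewrite in_setT.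
have [T0 HT] := mainG Ha a0 c0 (leqnn (#|[set: 'I_m.+1]| + #|[set: 'I_n.+1]|)) I0 J0 e0.
exists T0 => U V [i [j [[h0 [hU hV]] [EV [EU H]]]]] t hT.
have S : Sys A (2 * a) setT setT U V i j 0 (0 + t).
  split=> t' _ _.
    by split => //; rewrite in_setT.
  have [hEV [hEU [hi hj]]] := H t'.
  split=> l _.
    have := hi l; have := hEV l; have := hEV (i t'.+1).
    rewrite !ltr_norml => /andP [p1 p2] /andP [p3 p4]; rewrite /a; lra.
  have := hj l; have := hEU l; have := hEU (j t'.+1).
  rewrite !ltr_norml => /andP [p1 p2] /andP [p3 p4]; rewrite /a; lra.
have := HT t hT U V i j 0%N S.
rewrite add0n /DD !vmax_bmax !vmin_bmin h0 subrr subr0.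
done.
Qed.
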